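(* For every $x\in\Pi[N]$ and every $k\in\mathbb Z$, $$x[k]=\frac12\sum_{\mu=0}^{1}\sum_{l=0}^{N/2-1}\Big(y^{\mu}[l]\,\psi_{[1],\mu}[k-2l]+c^{\mu}[l]\,\varphi_{[1],\mu}[k-2l]\Big),$$ where $y^{\mu}[l]=\langle x,\psi_{[1],\mu}[\cdot-2l]\rangle$ and $c^{\mu}[l]=\langle x,\varphi_{[1],\mu}[\cdot-2l]\rangle$. Consequently the system $\{\psi_{[1],\mu}[\cdot-2l]\}\cup\{\varphi_{[1],\mu}[\cdot-2l]\}$ ($\mu\in\{0,1\}$, $0\le l<N/2$) is a tight frame of $\Pi[N]$ with frame bound $2$.
   Context: Let $N=2^{J}$ with $J\ge 1$ an integer and $\omega=e^{2\pi i/N}$. $\Pi[N]$ denotes the real vector space of real-valued $N$-periodic sequences $x=\{x[k]\}_{k\in\mathbb Z}$, with inner product $\langle x,y\rangle=\sum_{k=0}^{N-1}x[k]y[k]$. The DFT of an $N$-periodic sequence is $\hat x[n]=\sum_{k=0}^{N-1}x[k]\omega^{-kn}$, with inverse $x[k]=\frac1N\sum_{n=0}^{N-1}\hat x[n]\omega^{kn}$. Fix an integer $r\ge1$; let $U[n]=\tfrac12\big(\cos^{4r}\tfrac{\pi n}{N}+\sin^{4r}\tfrac{\pi n}{N}\big)$, $\beta[n]=\cos^{2r}\tfrac{\pi n}{N}/\sqrt{U[n]}$, $\alpha[n]=\omega^{n}\sin^{2r}\tfrac{\pi n}{N}/\sqrt{U[n]}$. The first-level wavelet packets $\psi_{[1],0},\psi_{[1],1}\in\Pi[N]$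 have DFTs $\hat\psi_{[1],0}=\beta$, $\hat\psi_{[1],1}=\alpha$. Known fact (may be assumed): $\{\psi_{[1],\mu}[\cdot-2l]:\mu\in\{0,1\},\,0\le l<N/2\}$ is an orthonormal basis of $\Pi[N]$. The complementary wavelet packets $\varphi_{[1],\mu}\in\Pi[N]$ have DFT $\hat\varphi_{[1],\mu}[n]=-i\hat\psi_{[1],\mu}[n]$ for $0<n<N/2$, $=i\hat\psi_{[1],\mu}[n]$ for $N/2<n<N$, and $=\hat\psi_{[1],\mu}[n]$ for $n\in\{0,N/2\}$ (indices mod $N$). *)

(* Defs.v *)
From Stdlib Require Import Reals ZArith Arith Lra Lia.
Open Scope R_scope.

Record Cx := mkC { Cre : R ; Cim : R }.
Definition Cadd (a b : Cx) : Cx := mkC (Cre a + Cre b) (Cim a + Cim b).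
Definition Cmul (a b : Cx) : Cx :=
  mkC (Cre a * Cre b - Cim a * Cim b) (Cre a * Cim b + Cim a * Cre b).
Definition Creal (t : R) : Cx := mkC t 0.
Definition Ci : Cx := mkC 0 1.
Definition Cneg (a : Cx) : Cx := mkC (- Cre a) (- Cim a).

Fixpoint rsum (n : nat) (f : nat -> R) : R :=
  match n with O => 0 | S m => rsum m f + f m end.
Fixpoint csum (n : nat) (f : nat -> Cx) : Cx :=
  match n with O => Creal 0 | S m => Cadd (csum m f) (f m) end.

(* omega^m with omega = e^{2 pi i / N}, m an integer *)
Definition omega_pow (N : nat) (m : Z) : Cx :=
  mkC (cos (2 * PI * IZR m / INR N)) (sin (2 * PI * IZR m / INR N)).

Definition periodic (N : nat) (x : Z -> R) : Prop :=
  forall k : Z, x (k + Z.of_nat N)%Z = x k.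

Definition inner (N : nat) (x y : Z -> R) : R :=
  rsum N (fun k => x (Z.of_nat k) * y (Z.of_nat k)).

(* inverse DFT: x[k] = 1/N sum_{n=0}^{N-1} X[n] omega^{kn}.  The sequences
   considered have Hermitian-symmetric spectra, so this sum is real; we take
   its real part to obtain the element of Pi[N]. *)
Definition idft (N : nat) (X : nat -> Cx) (k : Z) : R :=
  / INR N * Cre (csum N (fun n => Cmul (X n) (omega_pow N (k * Z.of_nat n)%Z))).

Definition Ucoef (N r n : nat) : R :=
  / 2 * (cos (PI * INR n / INR N) ^ (4 * r) + sin (PI * INR n / INR N) ^ (4 * r)).

Definition beta (N r n : nat) : Cx :=
  Creal (cos (PI * INR n / INR N) ^ (2 * r) / sqrt (Ucoef N r n)).

Definition alpha (N r n : nat) : Cx :=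
  Cmul (omega_pow N (Z.of_nat n))
       (Creal (sin (PI * INR n / INR N) ^ (2 * r) / sqrt (Ucoef N r n))).

Definition psihat (N r mu n : nat) : Cx :=
  match mu with O => beta N r n | _ => alpha N r n end.

Definition phihat (N r mu n : nat) : Cx :=
  if andb (Nat.ltb 0 n) (Nat.ltb n (N / 2)) then Cmul (Cneg Ci) (psihat N r mu n)
  else if andb (Nat.ltb (N / 2) n) (Nat.ltb n N) then Cmul Ci (psihat N r mu n)
  else psihat N r mu n.

Definition psi1 (N r mu : nat) : Z -> R := idft N (psihat N r mu).
Definition phi1 (N r mu : nat) : Z -> R := idft N (phihat N r mu).

Definition shift2 (f : Z -> R) (l : nat) : Z -> R :=
  fun k => f (k - 2 * Z.of_nat l)%Z.

(* Main.v *)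
Require Import Defs.
From Stdlib Require Import Reals ZArith Arith Lia Lra.
Open Scope R_scope.


Lemma Zper (x : R) (a : Z) :
  cos (x + 2 * PI * IZR a) = cos x /\ sin (x + 2 * PI * IZR a) = sin x.
Proof.
  destruct (Z_le_gt_dec 0 a) as [Ha|Ha].
  - rewrite <- (Z2Nat.id a Ha), <- INR_IZR_INZ.
    replace (x + 2 * PI * INR (Z.to_nat a)) with (x + 2 * INR (Z.to_nat a) * PI) by ring.
    split; [apply cos_period | apply sin_period].
  - assert (Ha' : a = (- Z.of_nat (Z.to_nat (- a)))%Z) by lia.
    rewrite Ha', opp_IZR, <- INR_IZR_INZ.
    set (n := Z.to_nat (- a)).
    assert (Hx : x = (x + 2 * PI * - INR n) + 2 * INR n * PI) by ring.
    split.
    + rewrite Hx at 2. rewrite cos_period. reflexivity.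
    + rewrite Hx at 2. rewrite sin_period. reflexivity.
Qed.

Lemma cos_neq1 (t : R) : 0 < t < 2 * PI -> cos t <> 1.
Proof.
  intros [H1 H2] H. assert (Hs : 0 < sin (t/2)) by (apply sin_gt_0; lra).
  replace t with (2 * (t/2)) in H by field. rewrite cos_2a_sin in H. nra.
Qed.

Lemma geo_neq1 (q P : nat) (d : Z) : (0 < q)%nat -> (0 < P)%nat ->
  (d mod Z.of_nat P <> 0)%Z ->
  cos (2 * PI * IZR (Z.of_nat q * d) / INR (q * P)) <> 1.
Proof.
  intros Hq HP Hd.
  assert (HP' : (0 < Z.of_nat P)%Z) by lia.
  pose proof (Z.div_mod d (Z.of_nat P) ltac:(lia)) as Hdm.
  pose proof (Z.mod_pos_bound d (Z.of_nat P) HP') as Hb.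
  set (b := (d mod Z.of_nat P)%Z) in *. set (a := (d / Z.of_nat P)%Z) in *.
  assert (Hq0 : IZR (Z.of_nat q) <> 0) by (apply not_0_IZR; lia).
  assert (HP0 : 0 < IZR (Z.of_nat P)) by (apply IZR_lt; lia).
  replace (2 * PI * IZR (Z.of_nat q * d) / INR (q * P))
    with (2 * PI * IZR b / IZR (Z.of_nat P) + 2 * PI * IZR a).
  2:{ rewrite Hdm. rewrite mult_INR, !INR_IZR_INZ, mult_IZR, plus_IZR, mult_IZR.
      field. split; lra. }
  rewrite (proj1 (Zper _ _)). apply cos_neq1.
  assert (Hb0 : 0 < IZR b) by (apply IZR_lt; lia).
  assert (HbP : IZR b < IZR (Z.of_nat P)) by (apply IZR_lt; lia).
  set (u := IZR b / IZR (Z.of_nat P)).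
  assert (Hu : IZR (Z.of_nat P) * u = IZR b) by (unfold u; field; lra).
  assert (0 < u < 1) by nra.
  pose proof PI_RGT_0.
  replace (2 * PI * IZR b / IZR (Z.of_nat P)) with (2 * PI * u) by (unfold u, Rdiv; ring).
  split; nra.
Qed.

Definition th (N n : nat) : R := PI * INR n / INR N.
Definition pn (N r n : nat) : R := cos (th N n) ^ (2 * r) / sqrt (Ucoef N r n).
Definition qn (N r n : nat) : R := sin (th N n) ^ (2 * r) / sqrt (Ucoef N r n).

Lemma beta_pn N r n : beta N r n = Creal (pn N r n).
Proof. reflexivity. Qed.
Lemma alpha_qn N r n : alpha N r n = Cmul (omega_pow N (Z.of_nat n)) (Creal (qn N r n)).
Proof. reflexivity. Qed.

Lemma even_pow (x : R) k : (- x) ^ (2 * k) = x ^ (2 * k).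
Proof. rewrite !pow_mult. f_equal. ring. Qed.

Lemma U_eq N r n : Ucoef N r n =
  / 2 * ((cos (th N n) ^ (2 * r)) ^ 2 + (sin (th N n) ^ (2 * r)) ^ 2).
Proof.
  unfold Ucoef, th. rewrite <- !pow_mult.
  replace (2 * r * 2)%nat with (4 * r)%nat by lia. reflexivity.
Qed.

Lemma AB_pos (c s : R) k : s ^ 2 + c ^ 2 = 1 ->
  0 < (c ^ (2 * k)) ^ 2 + (s ^ (2 * k)) ^ 2.
Proof.
  intros H. destruct (Req_dec c 0) as [Hc|Hc].
  - assert (s <> 0) by (intro Hs0; rewrite Hs0, Hc in H; simpl in H; lra).
    assert (s ^ (2 * k) <> 0) by (apply pow_nonzero; auto).
    nra.
  - assert (c ^ (2 * k) <> 0) by (apply pow_nonzero; auto). nra.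
Qed.

Lemma sc1 x : sin x ^ 2 + cos x ^ 2 = 1.
Proof. pose proof (sin2_cos2 x). unfold Rsqr in H. simpl. lra. Qed.

Lemma U_pos N r n : 0 < Ucoef N r n.
Proof. rewrite U_eq. pose proof (AB_pos (cos (th N n)) (sin (th N n)) r (sc1 _)). lra. Qed.

Lemma L3 N r n : pn N r n * pn N r n + qn N r n * qn N r n = 2.
Proof.
  unfold pn, qn. pose proof (U_pos N r n) as HU.
  pose proof (sqrt_sqrt _ (Rlt_le _ _ HU)) as Hs.
  pose proof (sqrt_lt_R0 _ HU) as Hs0.
  set (U := Ucoef N r n) in *.
  set (A := cos (th N n) ^ (2 * r)). set (B := sin (th N n) ^ (2 * r)).
  assert (HU' : U = / 2 * (A ^ 2 + B ^ 2)) by (unfold U, A, B; apply U_eq).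
  replace (A / sqrt U * (A / sqrt U) + B / sqrt U * (B / sqrt U))
    with ((A * A + B * B) / (sqrt U * sqrt U)) by (field; lra).
  rewrite Hs, HU'. field. simpl in HU'. nra.
Qed.

Lemma th_shift N M n : N = (2 * M)%nat -> (0 < M)%nat -> th N (n + M) = th N n + PI / 2.
Proof.
  intros -> HM. unfold th. rewrite plus_INR, mult_INR. simpl (INR 2).
  assert (INR M <> 0) by (apply not_0_INR; lia). field. auto.
Qed.

Lemma th_rev N n : (0 < N)%nat -> (n <= N)%nat -> th N (N - n) = PI - th N n.
Proof.
  intros HN Hn. unfold th. rewrite minus_INR by auto.
  assert (INR N <> 0) by (apply not_0_INR; lia). field. auto.
Qed.

Lemma cos_sh x : cos (x + PI / 2) = - sin x.
Proof. rewrite cos_plus, cos_PI2, sin_PI2. ring. Qed.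
Lemma sin_sh x : sin (x + PI / 2) = cos x.
Proof. rewrite sin_plus, cos_PI2, sin_PI2. ring. Qed.
Lemma cos_rv x : cos (PI - x) = - cos x.
Proof. rewrite cos_minus, cos_PI, sin_PI. ring. Qed.
Lemma sin_rv x : sin (PI - x) = sin x.
Proof. rewrite sin_minus, cos_PI, sin_PI. ring. Qed.

Lemma U_shift N M r n : N = (2 * M)%nat -> (0 < M)%nat -> Ucoef N r (n + M) = Ucoef N r n.
Proof.
  intros HN HM. rewrite !U_eq, (th_shift N M n HN HM), cos_sh, sin_sh, even_pow. ring.
Qed.

Lemma pn_shift N M r n : N = (2 * M)%nat -> (0 < M)%nat -> pn N r (n + M) = qn N r n.
Proof.
  intros HN HM. unfold pn, qn. rewrite (U_shift N M r n HN HM), (th_shift N M n HN HM), cos_sh, even_pow.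
  reflexivity.
Qed.

Lemma qn_shift N M r n : N = (2 * M)%nat -> (0 < M)%nat -> qn N r (n + M) = pn N r n.
Proof.
  intros HN HM. unfold pn, qn. rewrite (U_shift N M r n HN HM), (th_shift N M n HN HM), sin_sh.
  reflexivity.
Qed.

Lemma U_rev N r n : (0 < N)%nat -> (n <= N)%nat -> Ucoef N r (N - n) = Ucoef N r n.
Proof. intros HN Hn. rewrite !U_eq, (th_rev N n HN Hn), cos_rv, sin_rv, even_pow. ring. Qed.

Lemma pn_rev N r n : (0 < N)%nat -> (n <= N)%nat -> pn N r (N - n) = pn N r n.
Proof.
  intros HN Hn. unfold pn. rewrite (U_rev N r n HN Hn), (th_rev N n HN Hn), cos_rv, even_pow.
  reflexivity.
Qed.

Lemma qn_rev N r n : (0 < N)%nat -> (n <= N)%nat -> qn N r (N - n) = qn N r n.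
Proof.
  intros HN Hn. unfold qn. rewrite (U_rev N r n HN Hn), (th_rev N n HN Hn), sin_rv.
  reflexivity.
Qed.

Lemma ang_add (N : nat) (a b : Z) :
  2 * PI * IZR (a + b) / INR N = 2 * PI * IZR a / INR N + 2 * PI * IZR b / INR N.
Proof. rewrite plus_IZR. unfold Rdiv. ring. Qed.

Lemma ang_opp (N : nat) (a : Z) :
  2 * PI * IZR (- a) / INR N = - (2 * PI * IZR a / INR N).
Proof. rewrite opp_IZR. unfold Rdiv. ring. Qed.

Lemma ang_N (N : nat) (a : Z) : (0 < N)%nat ->
  2 * PI * IZR (Z.of_nat N * a) / INR N = 0 + 2 * PI * IZR a.
Proof.
  intros HN. rewrite mult_IZR, <- INR_IZR_INZ.
  assert (INR N <> 0) by (apply not_0_INR; lia). field. auto.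
Qed.

Lemma ang_M (N M : nat) : N = (2 * M)%nat -> (0 < M)%nat ->
  2 * PI * IZR (Z.of_nat M) / INR N = PI.
Proof.
  intros -> HM. rewrite <- INR_IZR_INZ, mult_INR. simpl (INR 2).
  assert (INR M <> 0) by (apply not_0_INR; lia). field. auto.
Qed.

Lemma ang_0 (N : nat) : 2 * PI * IZR 0 / INR N = 0.
Proof. unfold Rdiv. simpl. ring. Qed.

Lemma IZR2 : IZR 2 = 1 + 1.
Proof. reflexivity. Qed.

Lemma mod_cases (M n n' : nat) : (0 < M)%nat -> (n < 2 * M)%nat -> (n' < 2 * M)%nat ->
  ((Z.of_nat n' - Z.of_nat n) mod Z.of_nat M = 0)%Z ->
  n' = n \/ n' = (n + M)%nat \/ n = (n' + M)%nat.
Proof.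
  intros HM Hn Hn' Hd. apply Z.mod_divide in Hd; [|lia].
  destruct Hd as [t Ht].
  assert (t = 0 \/ t = 1 \/ t = -1)%Z by nia.
  destruct H as [H|[H|H]]; subst t; lia.
Qed.

Lemma div2M (M : nat) : Nat.div (2 * M) 2 = M.
Proof. rewrite Nat.mul_comm. apply Nat.div_mul. lia. Qed.

Lemma per_mult (N : nat) (x : Z -> R) : periodic N x ->
  forall (q : nat) (t : Z), x (t + Z.of_nat N * Z.of_nat q)%Z = x t.
Proof.
  intros HP q. induction q as [|q IH]; intros t.
  - f_equal. lia.
  - replace (t + Z.of_nat N * Z.of_nat (S q))%Z with ((t + Z.of_nat N * Z.of_nat q) + Z.of_nat N)%Z by lia.
    rewrite HP. apply IH.
Qed.

Lemma per_mod (N : nat) (x : Z -> R) (k : Z) : (0 < N)%nat -> periodic N x ->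
  x k = x (k mod Z.of_nat N)%Z.
Proof.
  intros HN HP.
  pose proof (Z.div_mod k (Z.of_nat N) ltac:(lia)) as Hk.
  destruct (Z_le_gt_dec 0 (k / Z.of_nat N)) as [Hq|Hq].
  - rewrite Hk at 1.
    replace (Z.of_nat N * (k / Z.of_nat N) + k mod Z.of_nat N)%Z
      with (k mod Z.of_nat N + Z.of_nat N * Z.of_nat (Z.to_nat (k / Z.of_nat N)))%Z by (rewrite Z2Nat.id; lia).
    apply per_mult; auto.
  - rewrite <- (per_mult N x HP (Z.to_nat (- (k / Z.of_nat N))) k).
    f_equal. rewrite Z2Nat.id by lia. lia.
Qed.

Lemma modeq (N : nat) (j k : Z) : (0 < N)%nat -> (0 <= j < Z.of_nat N)%Z ->
  ((j - k) mod Z.of_nat N = 0)%Z <-> j = (k mod Z.of_nat N)%Z.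
Proof.
  intros HN Hj. split.
  - intros H. apply Z.mod_divide in H; [|lia]. destruct H as [t Ht].
    replace k with (j + (- t) * Z.of_nat N)%Z by lia.
    rewrite Z_mod_plus_full. rewrite Z.mod_small; lia.
  - intros ->.
    pose proof (Z.div_mod k (Z.of_nat N) ltac:(lia)) as Hk.
    replace (k mod Z.of_nat N - k)%Z with ((- (k / Z.of_nat N)) * Z.of_nat N)%Z by lia.
    apply Z_mod_mult.
Qed.

From mathcomp Require ssreflect ssrfun ssrbool eqtype ssrnat seq fintype bigop ssralg ssrnum.
From mathcomp Require Rstruct complex.
From mathcomp.algebra_tactics Require ring lra.
From mathcomp.zify Require zify.

Module W.
Import mathcomp.algebra_tactics.ring mathcomp.algebra_tactics.lra.
Import ssreflect ssrfun ssrbool eqtype ssrnat seq fintype bigop ssralg ssrnum Rstruct complex.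
Import mathcomp.zify.zify.
Import GRing.Theory Num.Theory.
Local Open Scope ring_scope.
Local Open Scope complex_scope.

Definition toC (a : Cx) : R[i] := Complex (Cre a) (Cim a).

Lemma toC_add a b : toC (Cadd a b) = toC a + toC b.
Proof. by case: a => ? ?; case: b => ? ?. Qed.

Lemma toC_mul a b : toC (Cmul a b) = toC a * toC b.
Proof. by case: a => ? ?; case: b => ? ?. Qed.

Lemma toC_csum n f : toC (csum n f) = \sum_(0 <= i < n) toC (f i).
Proof.
elim: n => [|n IH]; first by rewrite big_geq.
by rewrite /= toC_add IH big_nat_recr.
Qed.

Lemma rsumE n f : rsum n f = \sum_(0 <= i < n) f i.
Proof.
elim: n => [|n IH]; first by rewrite big_geq.
by rewrite /= IH big_nat_recr.
Qed.

Definition cj (z : R[i]) : R[i] := conjc z.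
Lemma cjM a b : cj (a * b) = cj a * cj b.
Proof. by rewrite /cj rmorphM. Qed.
Lemma cjD a b : cj (a + b) = cj a + cj b.
Proof. by rewrite /cj rmorphD. Qed.
Lemma cjN a : cj (- a) = - cj a.
Proof. by rewrite /cj rmorphN. Qed.
Lemma cjK a : cj (cj a) = a.
Proof. by rewrite /cj conjcK. Qed.
Lemma cj_sum m n (F : nat -> R[i]) : cj (\sum_(m <= i < n) F i) = \sum_(m <= i < n) cj (F i).
Proof. by rewrite /cj rmorph_sum. Qed.
Lemma cjC (x : R) : cj (x%:C) = x%:C.
Proof. by rewrite /cj conjc_real. Qed.

Definition E (N : nat) (j : Z) : R[i] := toC (omega_pow N j).

Lemma ED N a b : E N (a + b) = E N a * E N b.
Proof.
rewrite /E /omega_pow /= ang_add cos_plus sin_plus.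
apply/eqP; rewrite eq_complex /=; apply/andP; split; apply/eqP;
  rewrite ?RplusE ?RminusE ?RmultE; ring.
Qed.

Lemma EN N a : E N (- a) = cj (E N a).
Proof. by rewrite /E /omega_pow /= ang_opp cos_neg sin_neg. Qed.

Lemma E_mulN N a : (0 < N)%N -> E N (Z.of_nat N * a) = 1.
Proof.
move=> HN; rewrite /E /omega_pow /= ang_N; last by apply/ltP.
by rewrite (proj1 (Zper _ _)) (proj2 (Zper _ _)) cos_0 sin_0.
Qed.

Lemma E0 N : E N 0 = 1.
Proof. by rewrite /E /omega_pow /= ang_0 cos_0 sin_0. Qed.

Lemma EEc N a : E N a * cj (E N a) = 1.
Proof.
rewrite /E /omega_pow /=.
have h := sc1 (2 * PI * IZR a / INR N)%R. rewrite !RpowE RplusE in h.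
apply/eqP; rewrite eq_complex /=; apply/andP; split; apply/eqP.
  by rewrite -[RHS]h; ring.
ring.
Qed.

Lemma E_M N M : N = (2 * M)%N -> (0 < M)%N -> E N (Z.of_nat M) = -1.
Proof.
move=> HN HM; rewrite /E /omega_pow /= (ang_M N M) //; last by apply/ltP.
rewrite cos_PI sin_PI.
apply/eqP; rewrite eq_complex /=; apply/andP; split; apply/eqP; rewrite ?oppr0 //.
Qed.


Lemma Epow N l a : E N (Z.of_nat l * a) = E N a ^+ l.
Proof.
elim: l => [|l IH]; first by rewrite expr0 /= E0.
have -> : (Z.of_nat l.+1 * a = Z.of_nat l * a + a)%Z by lia.
by rewrite ED IH exprSr.
Qed.

Lemma geo (q P : nat) (d : Z) : (0 < q)%N -> (0 < P)%N ->
  \sum_(0 <= l < P) E (q * P) (Z.of_nat q * Z.of_nat l * d) =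
  if (d mod Z.of_nat P =? 0)%Z then P%:R else 0.
Proof.
move=> Hq HP.
case: Z.eqb_spec => Hd.
  have [t Ht] : (Z.of_nat P | d)%Z by apply Z.mod_divide; [lia | exact Hd].
  rewrite (eq_bigr (fun _ => 1)); first by rewrite sumr_const_nat subn0.
  move=> l _.
  have -> : (Z.of_nat q * Z.of_nat l * d = Z.of_nat (q * P) * (Z.of_nat l * t))%Z by rewrite Ht; lia.
  by rewrite E_mulN //; lia.
set w := E (q * P) (Z.of_nat q * d).
have Hw : forall l, E (q * P) (Z.of_nat q * Z.of_nat l * d) = w ^+ l.
  move=> l; rewrite -Epow; congr E; lia.
rewrite (eq_bigr _ (fun l _ => Hw l)).
have HwP : w ^+ P = 1.
  rewrite -Epow.
  have -> : (Z.of_nat P * (Z.of_nat q * d) = Z.of_nat (q * P) * d)%Z by lia.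
  by rewrite E_mulN //; lia.
have Hw1 : w != 1.
  apply/negP => /eqP Hw1.
  have := congr1 (@complex.Re R) Hw1.
  rewrite /w /E /omega_pow /=.
  apply: geo_neq1; [apply/ltP => // | apply/ltP => // | exact Hd].
have : (w - 1) * \sum_(0 <= l < P) w ^+ l = 0.
  by rewrite big_mkord -subrX1 HwP subrr.
move/eqP; rewrite mulf_eq0 subr_eq0 (negbTE Hw1) /= => /eqP ->.
by [].
Qed.

Definition Sg N (G : nat -> R[i]) (t : Z) := \sum_(0 <= n < N) G n * E N (t * Z.of_nat n).

Definition Herm N (G : nat -> R[i]) :=
  G 0%N = cj (G 0%N) /\ forall n, (0 < n < N)%N -> G (N - n)%N = cj (G n).

Lemma S_real N G t : (0 < N)%N -> Herm N G -> cj (Sg N G t) = Sg N G t.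
Proof.
move=> HN [H0 HG].
rewrite /Sg cj_sum [in LHS]big_ltn // [in RHS]big_ltn //; congr (_ + _).
  rewrite cjM -H0 -EN; congr (_ * E N _); lia.
rewrite big_nat_rev.
apply: eq_big_nat => n /andP [Hn1 Hn2].
have -> : (0 + 1 + N - n.+1 = N - n)%N by lia.
rewrite cjM HG; last by lia.
rewrite cjK -EN.
have -> : (- (t * Z.of_nat (N - n)) = t * Z.of_nat n + Z.of_nat N * (- t))%Z by lia.
by rewrite ED E_mulN // mulr1.
Qed.

Lemma Re_real (z : R[i]) : cj z = z -> (complex.Re z)%:C = z.
Proof.
case: z => a b /= [hb].
have -> : b = 0 by lra.
by [].
Qed.

Lemma idftE N X t : idft N X t = (INR N)^-1 * complex.Re (Sg N (fun n => toC (X n)) t).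
Proof.
rewrite /idft /Sg RinvE RmultE.
have -> : Cre (csum N (fun n => Cmul (X n) (omega_pow N (t * Z.of_nat n)))) =
          complex.Re (toC (csum N (fun n => Cmul (X n) (omega_pow N (t * Z.of_nat n))))) by [].
rewrite toC_csum; congr (_ * complex.Re _).
Qed.


Lemma RCM (x y : R) : ((x * y)%:C : R[i]) = x%:C * y%:C.
Proof. by rewrite rmorphM. Qed.
Lemma RCn (n : nat) : (((n%:R : R))%:C : R[i]) = n%:R.
Proof. by rewrite rmorph_nat. Qed.
Lemma RCsum m n (F : nat -> R) : ((\sum_(m <= i < n) F i)%:C : R[i]) = \sum_(m <= i < n) (F i)%:C.
Proof. by rewrite rmorph_sum. Qed.

Definition Orth N M (G : nat -> nat -> R[i]) :=
  forall n n', (n < N)%N -> (n' < N)%N ->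
  ((Z.of_nat n' - Z.of_nat n) mod Z.of_nat M = 0)%Z ->
  \sum_(0 <= mu < 2) G mu n * cj (G mu n') = if n == n' then 2 else 0.

Lemma delta_sum N (f : nat -> R[i]) i : (i < N)%N ->
  \sum_(0 <= j < N) (if i == j then f j else 0) = f i.
Proof.
elim: N => [//|N IH] Hi.
rewrite big_nat_recr //=.
case: (ltnP i N) => H.
  have hiN : (i == N) = false by apply/eqP; lia.
  by rewrite IH // hiN addr0.
have -> : i = N by lia.
rewrite eqxx big1_seq ?add0r // => j; rewrite mem_index_iota => /andP [_ Hj].
have hNj : (N == j) = false by apply/eqP; lia.
by rewrite hNj.
Qed.

Lemma reorder (M N : nat) (A : nat -> nat -> nat -> R[i]) (F : nat -> nat -> R[i])
    (El : nat -> nat -> nat -> R[i]) :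
  \sum_(0 <= mu < 2) \sum_(0 <= l < M) \sum_(0 <= n < N) \sum_(0 <= n' < N)
     A mu n n' * (F n n' * El l n n') =
  \sum_(0 <= n < N) \sum_(0 <= n' < N)
     F n n' * ((\sum_(0 <= mu < 2) A mu n n') * (\sum_(0 <= l < M) El l n n')).
Proof.
under eq_bigr do rewrite exchange_big_nat.
under eq_bigr do under eq_bigr do rewrite exchange_big_nat.
rewrite exchange_big_nat.
under eq_bigr do rewrite exchange_big_nat.
apply: eq_bigr => n _; apply: eq_bigr => n' _ /=.
rewrite big_distrlr mulr_sumr; apply: eq_bigr => mu _; rewrite mulr_sumr.
by apply: eq_bigr => l _ /=; ring.
Qed.


Lemma prodC N G t1 t2 : (0 < N)%N -> Herm N G ->
  (((INR N)^-1 * complex.Re (Sg N G t1)) * ((INR N)^-1 * complex.Re (Sg N G t2)))%:C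
  = ((INR N)^-1)%:C * ((INR N)^-1)%:C * (Sg N G t1 * cj (Sg N G t2)).
Proof.
move=> HN HG.
rewrite !RCM !(Re_real _ (S_real _ _ _ HN HG)) (S_real _ _ _ HN HG).
by rewrite mulrACA.
Qed.

Lemma Sprod N G (m k : Z) (l : nat) :
  Sg N G (m - 2 * Z.of_nat l) * cj (Sg N G (k - 2 * Z.of_nat l)) =
  \sum_(0 <= n < N) \sum_(0 <= n' < N) (G n * cj (G n')) *
     (E N (m * Z.of_nat n - k * Z.of_nat n') *
      E N (Z.of_nat 2 * Z.of_nat l * (Z.of_nat n' - Z.of_nat n))).
Proof.
rewrite /Sg cj_sum big_distrlr.
apply: eq_bigr => n _; apply: eq_bigr => n' _ /=.
rewrite cjM -EN.
have -> : E N (m * Z.of_nat n - k * Z.of_nat n') *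
          E N (Z.of_nat 2 * Z.of_nat l * (Z.of_nat n' - Z.of_nat n)) =
          E N ((m - 2 * Z.of_nat l) * Z.of_nat n) * E N (- ((k - 2 * Z.of_nat l) * Z.of_nat n')).
  by rewrite -!ED; congr E; lia.
ring.
Qed.

Lemma stepC N M G n n' : N = (2 * M)%N -> (0 < M)%N -> Orth N M G ->
  (n < N)%N -> (n' < N)%N ->
  (\sum_(0 <= mu < 2) G mu n * cj (G mu n')) *
  (\sum_(0 <= l < M) E N (Z.of_nat 2 * Z.of_nat l * (Z.of_nat n' - Z.of_nat n))) =
  if n == n' then (2 * M)%:R else 0.
Proof.
move=> HN HM HO Hn Hn'.
case Hd: ((Z.of_nat n' - Z.of_nat n) mod Z.of_nat M =? 0)%Z.
  rewrite HO //; last by apply/Z.eqb_eq.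
  rewrite HN geo // Hd.
  by case: eqP => _; rewrite ?mul0r // natrM.
rewrite HN geo // Hd mulr0.
case: eqP => // Heq; subst n'.
by rewrite Z.sub_diag Z.mod_0_l in Hd; lia.
Qed.

Lemma kernel N M (X : nat -> nat -> Cx) (m k : Z) : N = (2 * M)%N -> (0 < M)%N ->
  (forall mu, Herm N (fun n => toC (X mu n))) ->
  Orth N M (fun mu n => toC (X mu n)) ->
  \sum_(0 <= mu < 2) \sum_(0 <= l < M)
     idft N (X mu) (m - 2 * Z.of_nat l) * idft N (X mu) (k - 2 * Z.of_nat l)
  = if ((m - k) mod Z.of_nat N =? 0)%Z then 1 else 0.
Proof.
move=> HN HM HH HO.
have HN0 : (0 < N)%N by lia.
apply: (@complexI R).
rewrite RCsum.
under eq_bigr => mu _ do rewrite RCsum.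
under eq_bigr => mu _ do under eq_bigr => l _ do rewrite !idftE (prodC _ _ _ _ HN0 (HH mu)) Sprod.
under eq_bigr => mu _ do rewrite -mulr_sumr.
rewrite -mulr_sumr reorder.
have step : forall n, (0 <= n < N)%N ->
   \sum_(0 <= n' < N) E N (m * Z.of_nat n - k * Z.of_nat n') *
      ((\sum_(0 <= mu < 2) toC (X mu n) * cj (toC (X mu n'))) *
       (\sum_(0 <= l < M) E N (Z.of_nat 2 * Z.of_nat l * (Z.of_nat n' - Z.of_nat n))))
   = E N (Z.of_nat 1 * Z.of_nat n * (m - k)) * (2 * M)%:R.
  move=> n /andP [_ Hn].
  rewrite (eq_big_nat _ _ (F2 := fun n' => if n == n' then
                 E N (Z.of_nat 1 * Z.of_nat n' * (m - k)) * (2 * M)%:R else 0)).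
    by rewrite delta_sum.
  move=> n' /andP [_ Hn'].
  rewrite (stepC _ _ (fun mu n => toC (X mu n)) n n' HN HM HO Hn Hn').
  case: eqP => [<-|_]; last by rewrite mulr0.
  by congr (E N _ * _); lia.
rewrite (eq_big_nat _ _ step) -mulr_suml.
have := geo 1 N (m - k) (isT : (0 < 1)%N) HN0; rewrite mul1n => ->.
case: Z.eqb; last by rewrite mul0r mulr0.
rewrite -!RCn -!RCM; congr (_%:C).
rewrite INRE HN. field.
rewrite pnatr_eq0; lia.
Qed.


Lemma sum2 (F : nat -> R[i]) : \sum_(0 <= mu < 2) F mu = F 0%N + F 1%N.
Proof. by rewrite big_ltn // big_nat1. Qed.

Lemma RCD (x y : R) : ((x + y)%:C : R[i]) = x%:C + y%:C.
Proof. by rewrite rmorphD. Qed.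

Lemma psiC0 N r n : toC (psihat N r 0 n) = (pn N r n)%:C.
Proof. by []. Qed.

Lemma psiC1 N r mu n : (0 < mu)%N ->
  toC (psihat N r mu n) = E N (Z.of_nat n) * (qn N r n)%:C.
Proof. by case: mu => // mu _; rewrite /psihat alpha_qn toC_mul. Qed.

Lemma E_rev N n : (0 < N)%N -> (n <= N)%N -> E N (Z.of_nat (N - n)) = cj (E N (Z.of_nat n)).
Proof.
move=> HN Hn; rewrite -EN.
have -> : Z.of_nat (N - n) = (- Z.of_nat n + Z.of_nat N * 1)%Z by lia.
by rewrite ED E_mulN // mulr1.
Qed.

Lemma E_shift N M n : N = (2 * M)%N -> (0 < M)%N ->
  E N (Z.of_nat (n + M)) = - E N (Z.of_nat n).
Proof.
move=> HN HM.
have -> : Z.of_nat (n + M) = (Z.of_nat n + Z.of_nat M)%Z by lia.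
by rewrite ED (E_M N M) // mulrN1.
Qed.

Lemma Herm_psi N M r mu : N = (2 * M)%N -> (0 < M)%N ->
  Herm N (fun n => toC (psihat N r mu n)).
Proof.
move=> HN HM; have HN0 : (0 < N)%N by lia.
case: mu => [|mu].
  split; first by rewrite psiC0 cjC.
  move=> n /andP [Hn1 Hn2].
  by rewrite !psiC0 cjC pn_rev //; lia.
rewrite /Herm !psiC1 //; split.
  by rewrite (_ : Z.of_nat 0 = 0%Z) // E0 mul1r cjC.
move=> n /andP [Hn1 Hn2].
rewrite !psiC1 // E_rev //; last by lia.
by rewrite qn_rev ?cjM ?cjC //; lia.
Qed.

Lemma Orth_psi N M r : N = (2 * M)%N -> (0 < M)%N ->
  Orth N M (fun mu n => toC (psihat N r mu n)).
Proof.
move=> HN HM n n' Hn Hn' Hd.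
have HMp : (0 < M)%coq_nat by apply/ltP.
rewrite sum2 !psiC0 !psiC1 // !cjM !cjC.
have := mod_cases M n n' HMp ltac:(apply/ltP; lia) ltac:(apply/ltP; lia) Hd.
case=> [->|[->|->]].
- rewrite eqxx.
  have -> : E N (Z.of_nat n) * (qn N r n)%:C * (cj (E N (Z.of_nat n)) * (qn N r n)%:C) =
            (E N (Z.of_nat n) * cj (E N (Z.of_nat n))) * ((qn N r n)%:C * (qn N r n)%:C) by ring.
  rewrite EEc mul1r -!RCM -RCD.
  have h := L3 N r n. rewrite RplusE !RmultE IZR2 RplusE in h.
  by rewrite h rmorphD rmorph1.
- have -> : (n == (n + M)%N) = false by apply/eqP; lia.
  rewrite (pn_shift N M r n HN HMp) (qn_shift N M r n HN HMp) (E_shift N M n HN HM) cjN.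
  have -> : (pn N r n)%:C * (qn N r n)%:C +
            E N (Z.of_nat n) * (qn N r n)%:C * (- cj (E N (Z.of_nat n)) * (pn N r n)%:C) =
            ((pn N r n)%:C * (qn N r n)%:C) * (1 - E N (Z.of_nat n) * cj (E N (Z.of_nat n))) by ring.
  by rewrite EEc subrr mulr0.
- have -> : ((n' + M)%N == n') = false by apply/eqP; lia.
  rewrite (pn_shift N M r n' HN HMp) (qn_shift N M r n' HN HMp) (E_shift N M n' HN HM).
  have -> : (qn N r n')%:C * (pn N r n')%:C +
            - E N (Z.of_nat n') * (pn N r n')%:C * (cj (E N (Z.of_nat n')) * (qn N r n')%:C) =
            ((pn N r n')%:C * (qn N r n')%:C) * (1 - E N (Z.of_nat n') * cj (E N (Z.of_nat n'))) by ring.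
  by rewrite EEc subrr mulr0.
Qed.


Definition hh (N n : nat) : R[i] :=
  if andb (Nat.ltb 0 n) (Nat.ltb n (Nat.div N 2)) then - 'i
  else if andb (Nat.ltb (Nat.div N 2) n) (Nat.ltb n N) then 'i else 1.

Lemma phiC N r mu n : toC (phihat N r mu n) = hh N n * toC (psihat N r mu n).
Proof.
rewrite /phihat /hh.
case: andb; first by rewrite toC_mul.
case: andb; first by rewrite toC_mul.
by rewrite mul1r.
Qed.

Lemma ltbE a b : Nat.ltb a b = (a < b)%N.
Proof.
apply/idP/idP => H.
  by apply/ltP; apply Nat.ltb_lt.
by apply Nat.ltb_lt; apply/ltP.
Qed.

Lemma hh_val N M n : N = (2 * M)%N ->
  hh N n = if (0 < n < M)%N then - 'i else if (M < n < N)%N then 'i else 1.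
Proof. by move=> HN; rewrite /hh !ltbE HN div2M. Qed.

Lemma cj1 : cj 1 = 1.
Proof. by rewrite /cj rmorph1. Qed.

Lemma cj_i : cj 'i = - 'i.
Proof. by apply/eqP; rewrite eq_complex /= oppr0 !eqxx. Qed.

Lemma i_mi : 'i * - 'i = 1 :> R[i].
Proof. by apply/eqP; rewrite eq_complex /=; apply/andP; split; apply/eqP; ring. Qed.

Lemma hh_lo N M n : N = (2 * M)%N -> (0 < n)%N -> (n < M)%N -> hh N n = - 'i.
Proof.
move=> HN H1 H2; rewrite (hh_val N M) //.
by rewrite (_ : (0 < n < M)%N = true) //; apply/andP.
Qed.

Lemma hh_hi N M n : N = (2 * M)%N -> (M < n)%N -> (n < N)%N -> hh N n = 'i.
Proof.
move=> HN H1 H2; rewrite (hh_val N M) //.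
rewrite (_ : (0 < n < M)%N = false); last by apply/negbTE/negP => /andP [? ?]; lia.
by rewrite (_ : (M < n < N)%N = true) //; apply/andP.
Qed.

Lemma hh_one N M n : N = (2 * M)%N -> (n = 0 \/ n = M)%N -> hh N n = 1.
Proof.
move=> HN H; rewrite (hh_val N M) //.
rewrite (_ : (0 < n < M)%N = false); last by apply/negbTE/negP => /andP [? ?]; lia.
by rewrite (_ : (M < n < N)%N = false) //; apply/negbTE/negP => /andP [? ?]; lia.
Qed.

Lemma hh_herm0 N M : N = (2 * M)%N -> hh N 0 = cj (hh N 0).
Proof. by move=> HN; rewrite (hh_one N M 0) // ?cj1 //; left. Qed.

Lemma hh_herm N M n : N = (2 * M)%N -> (0 < M)%N -> (0 < n < N)%N ->
  hh N (N - n) = cj (hh N n).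
Proof.
move=> HN HM /andP [Hn1 Hn2].
case: (ltngtP n M) => H.
- rewrite (hh_lo N M n) // (hh_hi N M (N - n)) //; try lia.
  by rewrite cjN cj_i opprK.
- rewrite (hh_hi N M n) // (hh_lo N M (N - n)) //; try lia.
  by rewrite cj_i.
- subst n.
  rewrite (hh_one N M M) //; last by right.
  rewrite (hh_one N M (N - M)) //; last by right; lia.
  by rewrite cj1.
Qed.

Lemma hh_unit N M n : N = (2 * M)%N -> hh N n * cj (hh N n) = 1.
Proof.
move=> HN; rewrite (hh_val N M) //.
case: ifP => _; first by rewrite cjN cj_i opprK mulNr -mulrN i_mi.
case: ifP => _; first by rewrite cj_i i_mi.
by rewrite cj1 mulr1.
Qed.

Lemma Herm_h N M G : N = (2 * M)%N -> (0 < M)%N -> Herm N G ->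
  Herm N (fun n => hh N n * G n).
Proof.
move=> HN HM [H0 H]; split.
  by rewrite cjM -H0 -(hh_herm0 N M).
move=> n Hn; by rewrite cjM (H n Hn) (hh_herm N M n).
Qed.

Lemma Orth_h N M G : N = (2 * M)%N -> Orth N M G ->
  Orth N M (fun mu n => hh N n * G mu n).
Proof.
move=> HN HO n n' Hn Hn' Hd.
have -> : \sum_(0 <= mu < 2) hh N n * G mu n * cj (hh N n' * G mu n') =
          (hh N n * cj (hh N n')) * \sum_(0 <= mu < 2) G mu n * cj (G mu n').
  by rewrite mulr_sumr; apply: eq_bigr => mu _ /=; rewrite cjM; ring.
rewrite HO //.
case: eqP => [<-|_]; last by rewrite mulr0.
by rewrite (hh_unit N M n HN) mul1r.
Qed.

Lemma Herm_ext N G1 G2 : (forall n, G1 n = G2 n) -> Herm N G1 -> Herm N G2.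
Proof. by move=> E [H0 H]; split; [rewrite -!E | move=> n Hn; rewrite -!E; apply H]. Qed.

Lemma Orth_ext N M G1 G2 : (forall mu n, G1 mu n = G2 mu n) -> Orth N M G1 -> Orth N M G2.
Proof.
move=> E H n n' Hn Hn' Hd; rewrite -(H n n' Hn Hn' Hd).
by apply: eq_bigr => mu _; rewrite !E.
Qed.


Lemma delta_sumR N (f : nat -> R) i : (i < N)%N ->
  \sum_(0 <= j < N) (if i == j then f j else 0) = f i.
Proof.
elim: N => [//|N IH] Hi.
rewrite big_nat_recr //=.
case: (ltnP i N) => H.
  have hiN : (i == N) = false by apply/eqP; lia.
  by rewrite IH // hiN addr0.
have -> : i = N by lia.
rewrite eqxx big1_seq ?add0r // => j; rewrite mem_index_iota => /andP [_ Hj].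
have hNj : (N == j) = false by apply/eqP; lia.
by rewrite hNj.
Qed.

Lemma deltaR N (x : Z -> R) k : (0 < N)%N -> periodic N x ->
  \sum_(0 <= j < N) x (Z.of_nat j) *
     (if ((Z.of_nat j - k) mod Z.of_nat N =? 0)%Z then 1 else 0) = x k.
Proof.
move=> HN HP.
have HNp : (0 < N)%coq_nat by apply/ltP.
have Hb := Z.mod_pos_bound k (Z.of_nat N) ltac:(lia).
set j0 := Z.to_nat (k mod Z.of_nat N).
have Hj0 : (j0 < N)%N by rewrite /j0; lia.
rewrite (eq_big_nat _ _ (F2 := fun j => if j0 == j then x (Z.of_nat j) else 0)).
  rewrite delta_sumR // /j0 Z2Nat.id; last by lia.
  by rewrite -per_mod.
move=> j /andP [_ Hj].
have Hjj : (0 <= Z.of_nat j < Z.of_nat N)%Z by lia.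
case: Z.eqb_spec => H.
  have := proj1 (modeq N _ k HNp Hjj) H => Hj'.
  have -> : j0 = j by rewrite /j0 -Hj'; lia.
  by rewrite eqxx mulr1.
have -> : (j0 == j) = false.
  apply/eqP => Hj'; apply: H; apply/(modeq N _ k HNp Hjj).
  by rewrite -Hj' /j0 Z2Nat.id; lia.
by rewrite mulr0.
Qed.

Lemma Kpsi N M r m k : N = (2 * M)%N -> (0 < M)%N ->
  \sum_(0 <= mu < 2) \sum_(0 <= l < M)
     psi1 N r mu (m - 2 * Z.of_nat l) * psi1 N r mu (k - 2 * Z.of_nat l)
  = if ((m - k) mod Z.of_nat N =? 0)%Z then 1 else 0.
Proof.
move=> HN HM.
apply: (kernel N M (psihat N r)) => //.
  by move=> mu; apply: (Herm_psi N M).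
exact: Orth_psi.
Qed.

Lemma Kphi N M r m k : N = (2 * M)%N -> (0 < M)%N ->
  \sum_(0 <= mu < 2) \sum_(0 <= l < M)
     phi1 N r mu (m - 2 * Z.of_nat l) * phi1 N r mu (k - 2 * Z.of_nat l)
  = if ((m - k) mod Z.of_nat N =? 0)%Z then 1 else 0.
Proof.
move=> HN HM.
apply: (kernel N M (phihat N r)) => //.
  move=> mu; apply: (Herm_ext N (fun n => hh N n * toC (psihat N r mu n))).
    by move=> n; rewrite phiC.
  by apply: (Herm_h N M) => //; apply: (Herm_psi N M).
apply: (Orth_ext N M (fun mu n => hh N n * toC (psihat N r mu n))).
  by move=> mu n; rewrite phiC.
by apply: (Orth_h N M) => //; apply: (Orth_psi N M).
Qed.

Lemma reorg (M N : nat) (x : nat -> R) (p p' : nat -> nat -> nat -> R) (q q' : nat -> nat -> R) :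
  \sum_(0 <= mu < 2) \sum_(0 <= l < M)
    ((\sum_(0 <= j < N) x j * p mu l j) * q mu l + (\sum_(0 <= j < N) x j * p' mu l j) * q' mu l)
  = \sum_(0 <= j < N) x j * \sum_(0 <= mu < 2) \sum_(0 <= l < M)
       (p mu l j * q mu l + p' mu l j * q' mu l).
Proof.
under eq_bigr do under eq_bigr do rewrite !mulr_suml -big_split.
under eq_bigr do rewrite exchange_big_nat.
rewrite exchange_big_nat.
apply: eq_bigr => j _.
rewrite mulr_sumr; apply: eq_bigr => mu _.
rewrite mulr_sumr; apply: eq_bigr => l _ /=.
ring.
Qed.


Lemma innerE N x g l : inner N x (shift2 g l) =
  \sum_(0 <= j < N) x (Z.of_nat j) * g (Z.of_nat j - 2 * Z.of_nat l)%Z.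
Proof. by rewrite /inner rsumE. Qed.

Lemma IZR2E : IZR 2 = 2%:R :> R.
Proof. by rewrite IZR2 RplusE. Qed.

Lemma two_neq0 : (2%:R : R) != 0.
Proof. by rewrite pnatr_eq0. Qed.

Lemma recon N M r x k : N = (2 * M)%N -> (0 < M)%N -> periodic N x ->
  x k = Rmult (Rinv (IZR 2)) (rsum 2 (fun mu => rsum (Nat.div N 2) (fun l =>
    Rplus (Rmult (inner N x (shift2 (psi1 N r mu) l)) (shift2 (psi1 N r mu) l k))
          (Rmult (inner N x (shift2 (phi1 N r mu) l)) (shift2 (phi1 N r mu) l k))))).
Proof.
move=> HN HM HP; have HN0 : (0 < N)%N by lia.
have HD : Nat.div N 2 = M by rewrite HN div2M.
rewrite HD rsumE.
under eq_bigr do rewrite rsumE.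
under eq_bigr do under eq_bigr do rewrite !innerE.
rewrite /shift2.
rewrite (reorg M N (fun j => x (Z.of_nat j))
   (fun mu l j => psi1 N r mu (Z.of_nat j - 2 * Z.of_nat l))
   (fun mu l j => phi1 N r mu (Z.of_nat j - 2 * Z.of_nat l))
   (fun mu l => psi1 N r mu (k - 2 * Z.of_nat l))
   (fun mu l => phi1 N r mu (k - 2 * Z.of_nat l))).
have Hj : forall j : nat,
  \sum_(0 <= mu < 2) \sum_(0 <= l < M)
     (psi1 N r mu (Z.of_nat j - 2 * Z.of_nat l) * psi1 N r mu (k - 2 * Z.of_nat l) +
      phi1 N r mu (Z.of_nat j - 2 * Z.of_nat l) * phi1 N r mu (k - 2 * Z.of_nat l)) =
  (if ((Z.of_nat j - k) mod Z.of_nat N =? 0)%Z then 1 else 0) *+ 2.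
  move=> j; rewrite mulr2n -{1}(Kpsi N M r (Z.of_nat j) k) // -(Kphi N M r (Z.of_nat j) k) //.
  rewrite -big_split; apply: eq_bigr => mu _ /=.
  by rewrite -big_split.
under eq_bigr do rewrite Hj.
rewrite -(deltaR N x k) // RinvE IZR2E RmultE mulr_sumr.
apply: eq_bigr => j _.
rewrite mulrnAr -mulr_natl.
by field.
Qed.


Lemma frame N M r x : N = (2 * M)%N -> (0 < M)%N -> periodic N x ->
  rsum 2 (fun mu => rsum (Nat.div N 2) (fun l =>
     Rplus (pow (inner N x (shift2 (psi1 N r mu) l)) 2)
           (pow (inner N x (shift2 (phi1 N r mu) l)) 2)))
  = Rmult (IZR 2) (inner N x x).
Proof.
move=> HN HM HP; have HN0 : (0 < N)%N by lia.
have HD : Nat.div N 2 = M by rewrite HN div2M.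
pose A mu l := inner N x (shift2 (psi1 N r mu) l).
pose B mu l := inner N x (shift2 (phi1 N r mu) l).
have -> : rsum 2 (fun mu => rsum (Nat.div N 2) (fun l =>
     Rplus (pow (inner N x (shift2 (psi1 N r mu) l)) 2)
           (pow (inner N x (shift2 (phi1 N r mu) l)) 2))) =
   \sum_(0 <= mu < 2) \sum_(0 <= l < M)
    ((\sum_(0 <= j < N) x (Z.of_nat j) * psi1 N r mu (Z.of_nat j - 2 * Z.of_nat l)) * A mu l +
     (\sum_(0 <= j < N) x (Z.of_nat j) * phi1 N r mu (Z.of_nat j - 2 * Z.of_nat l)) * B mu l).
  rewrite HD rsumE; apply: eq_bigr => mu _; rewrite rsumE; apply: eq_bigr => l _.
  by rewrite /A /B !innerE RplusE !RpowE !expr2.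
rewrite (reorg M N (fun j => x (Z.of_nat j))
   (fun mu l j => psi1 N r mu (Z.of_nat j - 2 * Z.of_nat l))
   (fun mu l j => phi1 N r mu (Z.of_nat j - 2 * Z.of_nat l)) A B).
rewrite /inner rsumE RmultE mulr_sumr.
apply: eq_bigr => j _.
have Hx := recon N M r x (Z.of_nat j) HN HM HP.
have HS : rsum 2 (fun mu => rsum (Nat.div N 2) (fun l =>
    Rplus (Rmult (inner N x (shift2 (psi1 N r mu) l)) (shift2 (psi1 N r mu) l (Z.of_nat j)))
          (Rmult (inner N x (shift2 (phi1 N r mu) l)) (shift2 (phi1 N r mu) l (Z.of_nat j))))) =
   \sum_(0 <= mu < 2) \sum_(0 <= l < M)
     (psi1 N r mu (Z.of_nat j - 2 * Z.of_nat l) * A mu l +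
      phi1 N r mu (Z.of_nat j - 2 * Z.of_nat l) * B mu l).
  rewrite HD rsumE; apply: eq_bigr => mu _; rewrite rsumE; apply: eq_bigr => l _ /=.
  by rewrite /A /B /shift2 RplusE !RmultE; ring.
rewrite HS RinvE RmultE IZR2E in Hx.
rewrite IZR2E {3}Hx.
move: (\sum_(0 <= mu < 2) _) => S.
rewrite !RmultE; by field.
Qed.


Lemma main_aux (J r : nat) (HJ : le 1 J) :
  let N := Nat.pow 2 J in
  (forall x : Z -> R, periodic N x ->
   forall k : Z,
     x k = Rmult (Rinv (IZR 2)) (rsum 2 (fun mu => rsum (Nat.div N 2) (fun l =>
       Rplus (Rmult (inner N x (shift2 (psi1 N r mu) l)) (shift2 (psi1 N r mu) l k))
             (Rmult (inner N x (shift2 (phi1 N r mu) l)) (shift2 (phi1 N r mu) l k))))))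
  /\
  (forall x : Z -> R, periodic N x ->
     rsum 2 (fun mu => rsum (Nat.div N 2) (fun l =>
       Rplus (pow (inner N x (shift2 (psi1 N r mu) l)) 2)
             (pow (inner N x (shift2 (phi1 N r mu) l)) 2)))
     = Rmult (IZR 2) (inner N x x)).
Proof.
move=> N.
case: J HJ @N => [|J] HJ N; first by exfalso; lia.
set M := Nat.pow 2 J.
have HN : N = (2 * M)%N by [].
have HM : (0 < M)%N.
  apply/ltP; apply Nat.neq_0_lt_0; apply Nat.pow_nonzero; lia.
split.
  by move=> x HP k; apply: (recon N M r x k HN HM HP).
by move=> x HP; apply: (frame N M r x HN HM HP).
Qed.

End W.

Theorem corollary4p4 (J r : nat) (HJ : (1 <= J)%nat) (Hr : (1 <= r)%nat) :
  let N := (2 ^ J)%nat in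
  (* reconstruction formula *)
  (forall x : Z -> R, periodic N x ->
   forall k : Z,
     x k = / 2 * rsum 2 (fun mu => rsum (N / 2) (fun l =>
             inner N x (shift2 (psi1 N r mu) l) * shift2 (psi1 N r mu) l k
           + inner N x (shift2 (phi1 N r mu) l) * shift2 (phi1 N r mu) l k)))
  /\
  (* tight frame of Pi[N] with frame bound 2 *)
  (forall x : Z -> R, periodic N x ->
     rsum 2 (fun mu => rsum (N / 2) (fun l =>
             (inner N x (shift2 (psi1 N r mu) l)) ^ 2
           + (inner N x (shift2 (phi1 N r mu) l)) ^ 2))
     = 2 * inner N x x).
Proof.
  exact (W.main_aux J r HJ).
Qed.
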